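(* A ranked poset is (isomorphic to) a nice section if and only if it is a two-element antichain or a 6-stack. Consequently, a ranked poset is (isomorphic to) a tower of nice sections if and only if it is a 6-tower.
   Context: All posets are finite. For a poset $P$ and $p\in P$, the rank $r(p)$ of $p$ is the largest $m$ such that there is a chain $p_0<\dots<p_m=p$ in $P$. $P$ is ranked of rank $r(P)$ if every maximal chain has exactly $r(P)+1$ elements. For $0\le i\le j$, $P(i,j)=\{p\in P:i\le r(p)\le j\}$, $P(i)=P(i,i)$ (induced order). The ordinal sum of posets $P_1,\dots,P_k$ ($k\ge1$) is their disjoint union ordered by the orders of the $P_i$ together with $p<q$ whenever $p\in P_i,q\in P_j,i<j$. The 6-crown $C_6$ is the poset on $\{x_0,x_1,x_2,y_0,y_1,y_2\}$ whose only strict comparabilities are $x_0<y_0>x_1<y_1>x_2<y_2>x_0$. A 6-stack is a ranked poset $P$ of rank $n\ge1$ such that $P(i,i+1)\cong C_6$ for each $0\le i<n$. A 6-tower is an ordinal sum of one or more posets each of which is a two-element antichain or a 6-stack. A section is either a two-element antichain or a poset on the set $\{[i,k]: 0\le i\le 2,\ 0\le k\le n\}$ (with $3(n+1)$ distinct elements), for some $n\ge 1$, such that: (1) $[i,k]<[i,l]$ whenever $0\le i\le 2$ and $0\le k<l\le n$; (2) for each $k$, $\{[0,k],[1,k],[2,k]\}$ is an antichain; (3) for all $i,j,k,l$, $[i,k]<[j,l]$ implies $[i+1,k]<[j+1,l]$ (first indices mod $3$); (4) for each $0\le k<n$ there are $i,j\in\{0,1,2\}$ with $[i,k]\not<[j,k+1]$.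 A section $P$ is nice if for all $p<q$ in $P$ there exist $r,s\in P$ with $p<r$, $q\not<r$, and $s<q$, $s\not<p$. A tower of (nice) sections is an ordinal sum of one or more (nice) sections. *)

(* Defs.v *)
(* Finite posets are represented as a finType T together
   with a strict order relation lt : rel T (irreflexive and transitive). *)
From mathcomp Require Import all_boot.
Set Implicit Arguments. Unset Strict Implicit. Unset Printing Implicit Defensive.

Definition strict_order (T : finType) (lt : rel T) : Prop :=
  irreflexive lt /\ transitive lt.

Definition poset_iso (T T' : finType) (lt : rel T) (lt' : rel T') : Prop :=
  exists f : T -> T', bijective f /\ forall x y, lt x y = lt' (f x) (f y).

Definition sub_rel (T : finType) (A : pred T) (lt : rel T) : rel {x : T | A x} :=
  fun u v => lt (val u) (val v).
Arguments sub_rel {T} A lt.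

(* r(p): the largest m such that there is a chain p_0 < ... < p_m = p.
   (A chain in a finite strict order has at most #|T| elements, so m < #|T|.) *)
Definition rank (T : finType) (lt : rel T) (p : T) : nat :=
  \max_(m < #|T|)
     (if [exists t : (m.+1).-tuple T, sorted lt t && (last p t == p)] then val m else 0).

Definition is_chain (T : finType) (lt : rel T) (C : {set T}) : Prop :=
  forall x y, x \in C -> y \in C -> x != y -> lt x y || lt y x.

Definition maximal_chain (T : finType) (lt : rel T) (C : {set T}) : Prop :=
  is_chain lt C /\ forall D : {set T}, is_chain lt D -> C \subset D -> D = C.

Definition ranked_of_rank (T : finType) (lt : rel T) (n : nat) : Prop :=
  forall C : {set T}, maximal_chain lt C -> #|C| = n.+1.

Definition ranked (T : finType) (lt : rel T) : Prop :=
  exists n, ranked_of_rank lt n.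

Definition rank_slice (T : finType) (lt : rel T) (i j : nat) : pred T :=
  fun p => (i <= rank lt p) && (rank lt p <= j).

Definition Pij (T : finType) (lt : rel T) (i j : nat) :
  rel {x : T | rank_slice lt i j x} := sub_rel (rank_slice lt i j) lt.
Arguments Pij {T} lt i j.

(* The 6-crown C6 on bool * 'I_3: (false,i) = x_i, (true,i) = y_i.
   Strict comparabilities: x0<y0, x1<y0, x1<y1, x2<y1, x2<y2, x0<y2. *)
Definition C6_lt : rel (bool * 'I_3) :=
  fun a b =>
    match a, b with
    | (false, i), (true, j) =>
        ((val i == 0) && (val j == 0)) || ((val i == 1) && (val j == 0)) ||
        ((val i == 1) && (val j == 1)) || ((val i == 2) && (val j == 1)) ||
        ((val i == 2) && (val j == 2)) || ((val i == 0) && (val j == 2))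
    | _, _ => false
    end.

Definition two_antichain (T : finType) (lt : rel T) : Prop :=
  #|T| = 2 /\ forall x y, ~~ lt x y.

Definition six_stack (T : finType) (lt : rel T) : Prop :=
  exists n, 1 <= n /\ ranked_of_rank lt n /\
    forall i, i < n -> poset_iso (Pij lt i i.+1) C6_lt.

(* Ordinal sum of one or more posets each satisfying Q: a map b onto blocks
   'I_k (k >= 1) such that elements of lower blocks lie below elements of
   higher blocks, and each block with the induced order satisfies Q.
   (Within a block the order is the induced one; no element of a higher block
   lies below one of a lower block, by antisymmetry.) *)
Definition ordinal_sum_of (Q : forall S : finType, rel S -> Prop)
  (T : finType) (lt : rel T) : Prop :=
  exists k (b : T -> 'I_k), 0 < k /\
    (forall x y, b x < b y -> lt x y) /\
    (forall i : 'I_k, Q _ (sub_rel (fun x => b x == i) lt)).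

Definition six_tower (T : finType) (lt : rel T) : Prop :=
  ordinal_sum_of (fun S ltS => two_antichain ltS \/ six_stack ltS) lt.

(* Section axioms (1)-(4) for a poset on {[i,k] : i < 3, k <= n},
   encoded as 'I_3 * 'I_n.+1 with [i,k] = (i,k). *)
Definition section_axioms (n : nat) (lt : rel ('I_3 * 'I_n.+1)) : Prop :=
  [/\ (forall (i : 'I_3) (k l : 'I_n.+1), k < l -> lt (i, k) (i, l)),
      (forall (i j : 'I_3) (k : 'I_n.+1), ~~ lt (i, k) (j, k)),
      (forall (i j : 'I_3) (k l : 'I_n.+1),
          lt (i, k) (j, l) -> lt (ordS i, k) (ordS j, l)) &
      (forall k : nat, k < n ->
          exists i j : 'I_3, ~~ lt (i, inord k) (j, inord k.+1))].

(* Niceness (READING: q \not\le r and s \not\le p). *)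
Definition nice (T : finType) (lt : rel T) : Prop :=
  forall p q, lt p q ->
    (exists r, lt p r /\ ~ (q = r \/ lt q r)) /\
    (exists s, lt s q /\ ~ (s = p \/ lt s p)).

Definition iso_nice_section (T : finType) (lt : rel T) : Prop :=
  (two_antichain lt /\ nice lt) \/
  exists n, 1 <= n /\ exists lt' : rel ('I_3 * 'I_n.+1),
    [/\ strict_order lt', section_axioms lt', nice lt' & poset_iso lt lt'].

Definition tower_of_nice_sections (T : finType) (lt : rel T) : Prop :=
  ordinal_sum_of iso_nice_section lt.

(* Main.v *)
Require Import Defs.
From mathcomp Require Import all_boot.
From mathcomp Require Import zify.
Set Implicit Arguments. Unset Strict Implicit. Unset Printing Implicit Defensive.

Section Rank.
Variables (T : finType) (lt : rel T).
Hypotheses (irr : irreflexive lt) (tr : transitive lt).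

Definition rankF x (m : 'I_#|T|) :=
  if [exists t : ((val m).+1).-tuple T, sorted lt t && (last x t == x)] then val m else 0.
Lemma rankE x : rank lt x = \max_(m < #|T|) rankF x m.
Proof. by []. Qed.

Lemma rank_lb s x : sorted lt s -> s != [::] -> last x s = x ->
  size s <= (rank lt x).+1.
Proof.
move=> ss sn sl.
have us : uniq s := sorted_uniq tr irr ss.
have szT : size s <= #|T| by rewrite -(card_uniqP us) max_card.
have s0 : 0 < size s by case: s sn {ss sl us szT}.
have hm : (size s).-1 < #|T| by rewrite prednK.
have hs : size s == ((size s).-1).+1 by rewrite prednK.
rewrite -(prednK s0) ltnS rankE.
apply: (@leq_trans (rankF x (Ordinal hm))); last exact: leq_bigmax.
rewrite /rankF; case: ifP => //= /negbT /negP []; apply/existsP; exists (Tuple hs) => /=.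
by rewrite ss sl eqxx.
Qed.

Lemma rank_ub x : exists s, [/\ sorted lt s, size s = (rank lt x).+1 & last x s = x].
Proof.
case r0 : (rank lt x) => [|r].
  by exists [:: x].
have cT : 0 < #|'I_(#|T|)| by rewrite card_ord; apply/card_gt0P; exists x.
move: r0; rewrite rankE; case: (eq_bigmax (rankF x) cT) => i0 ->; rewrite /rankF.
case: ifP => // /existsP [t /andP [st /eqP lt_]] e.
exists t; split => //; by rewrite size_tuple e.
Qed.

Lemma rank_lt x y : lt x y -> rank lt x < rank lt y.
Proof.
move=> xy; case: (rank_ub x) => s [ss sz sl].
have : size (rcons s y) <= (rank lt y).+1.
  apply: rank_lb.
  - case: s ss sz sl => [|a s] //= ss _ sl.
    by rewrite rcons_path ss sl.
  - by case: (s).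
  - by rewrite last_rcons.
by rewrite size_rcons sz.
Qed.

Lemma rank_pred x r : rank lt x = r.+1 -> exists z, lt z x /\ rank lt z = r.
Proof.
move=> rx; case: (rank_ub x) => s [ss sz sl].
rewrite rx in sz.
case/lastP: s ss sz sl => [|s' y] //.
case/lastP: s' => [|s z] //.
rewrite !size_rcons last_rcons => ss [sz] yx; subst y.
have zx : lt z x.
  case: s ss {sz} => [|a s] /=; first by rewrite andbT.
  by rewrite !rcons_path last_rcons => /andP[].
exists z; split => //.
apply/eqP; rewrite eqn_leq; apply/andP; split.
  by rewrite -ltnS -rx; apply: rank_lt.
have : size (rcons s z) <= (rank lt z).+1.
  apply: rank_lb; last by rewrite last_rcons.
  - by move: ss; rewrite -cats1 => /(cat_sorted2) [].
  - by case: (s).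
by rewrite size_rcons sz.
Qed.


Lemma rank_le_h (h : T -> nat) : (forall x y, lt x y -> h x < h y) ->
  forall x, rank lt x <= h x.
Proof.
move=> hm x; case: (rank_ub x) => [[|y s]] [ss sz sl] //.
have key : forall s y, path lt y s -> h y + size s <= h (last y s).
  elim=> [|a s' IH] y' /=; first by rewrite addn0.
  case/andP => ya pa; have := IH a pa; have := hm _ _ ya; lia.
move: sz => [<-]; have := key s y ss; rewrite /= in sl; rewrite sl; lia.
Qed.

Definition is_chainb (D : {set T}) :=
  [forall x in D, forall y in D, (x != y) ==> lt x y || lt y x].

Lemma is_chainP D : reflect (is_chain lt D) (is_chainb D).
Proof.
apply: (iffP forall_inP) => [H x y xD yD xy | H x xD].
  by move: (H x xD) => /forall_inP /(_ y yD); rewrite xy.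
by apply/forall_inP => y yD; apply/implyP; apply: H.
Qed.

Lemma ext_max C : is_chain lt C -> exists M, maximal_chain lt M /\ C \subset M.
Proof.
move=> /is_chainP cC.
pose P := fun D : {set T} => is_chainb D && (C \subset D).
have PC : P C by rewrite /P cC subxx.
case: (arg_maxnP (fun D : {set T} => #|D|) PC) => M /andP [cM sCM] Mmax.
exists M; split => //; split; first exact/is_chainP.
move=> D /is_chainP cD sMD.
have PD : P D by rewrite /P cD (subset_trans sCM sMD).
apply/eqP; rewrite eq_sym eqEcard sMD /=.
exact: Mmax.
Qed.

Lemma sorted_chain s : sorted lt s -> is_chain lt [set x in s].
Proof.
move=> ss x y; rewrite !inE => xs ys xy.
have hx : index x s < size s by rewrite index_mem.
have hy : index y s < size s by rewrite index_mem.
have ne : index x s != index y s.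
  by apply: contra xy => /eqP e; rewrite -(nth_index x xs) e nth_index.
case: (ltngtP (index x s) (index y s)) ne => // h _.
  by rewrite -{1}(nth_index x xs) -(nth_index x ys) (sorted_ltn_nth tr x ss) // inE.
by rewrite -{2}(nth_index x xs) -(nth_index x ys) (sorted_ltn_nth tr x ss) ?orbT // inE.
Qed.

Lemma rank_le n x : ranked_of_rank lt n -> rank lt x <= n.
Proof.
move=> rk; case: (rank_ub x) => s [ss sz _].
case: (ext_max (sorted_chain ss)) => M [mM sM].
have := subset_leq_card sM; rewrite (rk M mM) cardsE (card_uniqP (sorted_uniq tr irr ss)) sz.
by [].
Qed.

Lemma cover n s q k : ranked_of_rank lt n -> lt s q ->
  rank lt s < k < rank lt q -> exists m, [/\ rank lt m = k, lt s m & lt m q].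
Proof.
move=> rk sq /andP [sk kq].
have cC : is_chain lt [set s; q].
  move=> x y; rewrite !inE => /orP [] /eqP -> /orP [] /eqP -> //; rewrite ?eqxx //.
  - by rewrite sq.
  - by rewrite sq orbT.
case: (ext_max cC) => M [[cM mxM] sM].
have cardM := rk M (conj cM mxM).
pose f := fun x => (inord (rank lt x) : 'I_n.+1).
have finj : {in M &, injective f}.
  move=> x y xM yM /(congr1 (@nat_of_ord _)); rewrite /f !inordK ?ltnS ?(rank_le _ rk) // => e.
  apply/eqP; apply: contraT => xy.
  by case/orP: (cM x y xM yM xy) => /rank_lt; rewrite e ltnn.
have im : f @: M = setT.
  apply/eqP; rewrite eqEcard subsetT card_in_imset // cardM cardsT card_ord.
  by rewrite ltnSn.
have kn : k < n.+1 by rewrite ltnS; apply: leq_trans (rank_le q rk); apply: ltnW.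
have : (inord k : 'I_n.+1) \in f @: M by rewrite im inE.
case/imsetP => m mM /(congr1 (@nat_of_ord _)); rewrite /f !inordK ?ltnS ?(rank_le _ rk) // => e.
have sMs : s \in M by apply: (subsetP sM); rewrite !inE eqxx.
have qMs : q \in M by apply: (subsetP sM); rewrite !inE eqxx orbT.
exists m; split => //.
  have ne : s != m by apply: contraTneq sk => ->; rewrite e ltnn.
  case/orP: (cM s m sMs mM ne) => // /rank_lt; rewrite -e => h.
  by move: (ltn_trans h sk); rewrite ltnn.
have ne : m != q by apply: contraTneq kq => <-; rewrite -e ltnn.
case/orP: (cM m q mM qMs ne) => // /rank_lt; rewrite -e => h.
by move: (ltn_trans h kq); rewrite ltnn.
Qed.

End Rank.
Definition o1 : 'I_3 := @Ordinal 3 1 isT.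
Definition o2 : 'I_3 := @Ordinal 3 2 isT.

Definition adj (i j : 'I_3) := (j == i) || (ordS j == i).

Definition tauf (s : 'I_3 -> 'I_3) (j : 'I_3) :=
  if ordS (s j) == s (ordS j) then s j else s (ordS j).

Lemma FLc (a b c i j : 'I_3) : a != b -> b != c -> a != c ->
  let s := fun k : 'I_3 => nth a [:: a; b; c] k in
  C6_lt (false, s i) (true, tauf s j) = adj i j.
Proof. by move: a b c i j; do 5!case=> [[|[|[|?]]] ?] //. Qed.

Lemma FLs (s : 'I_3 -> 'I_3) (a b c : 'I_3) :
  (forall k, s k = nth a [:: a; b; c] k) -> a != b -> b != c -> a != c ->
  forall i j, C6_lt (false, s i) (true, tauf s j) = adj i j.
Proof.
move=> e ab bc ac i j.
have := FLc i j ab bc ac; rewrite /= /tauf !e. done.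
Qed.

Lemma FL (s : 'I_3 -> 'I_3) : injective s ->
  forall i j, C6_lt (false, s i) (true, tauf s j) = adj i j.
Proof.
move=> si; apply: (@FLs s (s ord0) (s o1) (s o2)).
- by case=> [[|[|[|?]]] p] //=; congr s; apply: val_inj; rewrite //=.
- by apply/eqP => /si /(congr1 val); rewrite /=.
- by apply/eqP => /si /(congr1 val); rewrite /=.
- by apply/eqP => /si /(congr1 val); rewrite /=.
Qed.

Lemma adj_inj (j j' : 'I_3) : (forall i, adj i j = adj i j') -> j = j'.
Proof.
move=> h; have := h ord0; have := h o1; have := h o2; clear h.
by move: j j'; do 2!case=> [[|[|[|?]]] ?] //; rewrite /adj /= => *; apply: val_inj.
Qed.

Lemma tauf_inj (s : 'I_3 -> 'I_3) : injective s -> injective (tauf s).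
Proof.
move=> si j j' e; apply: adj_inj => i; by rewrite -!(FL si) e.
Qed.

Lemma C6_diag (i : 'I_3) : C6_lt (false, i) (true, i).
Proof. by case: i => [[|[|[|?]]] ?]. Qed.

Lemma two_step (i j : 'I_3) : exists m, adj i m && adj m j.
Proof.
have h : forall a b : 'I_3, exists m : 'I_3, adj a m && adj m b.
  do 2!case=> [[|[|[|?]]] ?] //.
  all: try first [ by exists ord0 | by exists o1 | by exists o2 ].
exact: h.
Qed.

Lemma adj_other (i j : 'I_3) : exists i', adj i i' && (i' != j).
Proof.
move: i j; do 2!case=> [[|[|[|?]]] ?] //.
all: try first [ by exists ord0 | by exists o1 | by exists o2 ].
Qed.

Lemma adj_other2 (i j : 'I_3) : exists j', adj j' j && (j' != i).
Proof.
move: i j; do 2!case=> [[|[|[|?]]] ?] //.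
all: try first [ by exists ord0 | by exists o1 | by exists o2 ].
Qed.

Lemma adj_rot (i j : 'I_3) : adj i j -> adj (ordS i) (ordS j).
Proof. by move: i j; do 2!case=> [[|[|[|?]]] ?]. Qed.

Lemma adj_refl (i : 'I_3) : adj i i.
Proof. by rewrite /adj eqxx. Qed.


Section Stack.
Variables (T : finType) (lt : rel T).
Hypotheses (irr : irreflexive lt) (tr : transitive lt).
Variable n : nat.
Hypotheses (n1 : 0 < n) (rk : ranked_of_rank lt n)
  (hiso : forall i, i < n -> poset_iso (Pij lt i i.+1) C6_lt).

Lemma lohi K : K < n -> exists lo hi : 'I_3 -> T,
  [/\ forall i, rank lt (lo i) = K, forall i, rank lt (hi i) = K.+1,
      injective lo, injective hi &
      [/\ forall x, rank lt x = K -> exists i, lo i = x,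
      forall x, rank lt x = K.+1 -> exists i, hi i = x
    & forall i j, lt (lo i) (hi j) = C6_lt (false, i) (true, j)]].
Proof.
move=> Kn; case: (hiso Kn) => phi [[psi phiK psiK] hlt].
have hlt' : forall x y, lt (val x) (val y) = C6_lt (phi x) (phi y) := hlt.
pose lo i := val (psi (false, i)); pose hi i := val (psi (true, i)).
have slice x : rank_slice lt K K.+1 x -> rank lt x = K \/ rank lt x = K.+1.
  move/andP=> [a b]; rewrite leq_eqVlt ltnS in b; case/orP: b => [/eqP -> | b].
    by right.
  by left; apply/eqP; rewrite eqn_leq b a.
have hl i j : lt (lo i) (hi j) = C6_lt (false, i) (true, j) by rewrite hlt' !psiK.
have rlo i : rank lt (lo i) = K.
  case: (slice _ (valP (psi (false, i)))) => // /(rank_pred irr tr) [z [zl rz]].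
  have zs : rank_slice lt K K.+1 z by rewrite /rank_slice rz leqnn leqnSn.
  move: zl; rewrite -[z]/(val (exist _ z zs : {x | rank_slice lt K K.+1 x})).
  by rewrite hlt' psiK; case: (phi _) => [[] ?].
have rhi i : rank lt (hi i) = K.+1.
  case: (slice _ (valP (psi (true, i)))) => // r.
  have h : lt (lo i) (hi i) by rewrite hl C6_diag.
  by have := rank_lt irr tr h; rewrite rlo /hi r ltnn.
exists lo, hi; split => //.
- by move=> a b /val_inj /(can_inj psiK) [].
- by move=> a b /val_inj /(can_inj psiK) [].
split => //.
- move=> x r.
  have xs : rank_slice lt K K.+1 x by rewrite /rank_slice r leqnn leqnSn.
  case e: (phi (exist _ x xs)) => [b i].
  have e2 : psi (b, i) = exist _ x xs by rewrite -e phiK.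
  case: b e e2 => e e2.
    by move: (rhi i); rewrite /hi e2 /= r => /n_Sn.
  by exists i; rewrite /lo e2.
- move=> x r.
  have xs : rank_slice lt K K.+1 x by rewrite /rank_slice r leqnSn leqnn.
  case e: (phi (exist _ x xs)) => [b i].
  have e2 : psi (b, i) = exist _ x xs by rewrite -e phiK.
  case: b e e2 => e e2.
    by exists i; rewrite /hi e2.
  by move: (rlo i); rewrite /lo e2 /= r => /esym /n_Sn.
Qed.

Lemma glue K : K <= n -> exists lab : nat -> 'I_3 -> T,
  (forall k, k <= K -> [/\ forall i, rank lt (lab k i) = k, injective (lab k) &
      forall x, rank lt x = k -> exists i, lab k i = x]) /\
  (forall k, k < K -> forall i j, lt (lab k i) (lab k.+1 j) = adj i j).
Proof.
elim: K => [_|K IH Kn].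
  case: (lohi n1) => lo [hi [r1 _ i1 _ [s1 _ _]]].
  by exists (fun _ => lo); split => // k; rewrite leqn0 => /eqP ->.
case: (IH (ltnW Kn)) => lab [H1 H2].
case: (lohi Kn) => lo [hi [r1 r2 i1 i2 [s1 s2 hl]]].
case: (H1 K (leqnn K)) => rK iK sK.
pose sg i := odflt ord0 [pick m | lo m == lab K i].
have sgE i : lo (sg i) = lab K i.
  rewrite /sg; case: pickP => [m /eqP // | h].
  by case: (s1 _ (rK i)) => m e; move: (h m); rewrite e eqxx.
have sgi : injective sg by move=> a b e; apply: iK; rewrite -!sgE e.
pose lab' k := if k == K.+1 then (fun j => hi (tauf sg j)) else lab k.
have lab'E k : k <= K -> lab' k = lab k.
  by move=> kK; rewrite /lab' ifN // neq_ltn ltnS kK.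
exists lab'; split.
  move=> k; rewrite leq_eqVlt ltnS => /orP [/eqP -> | kK].
    rewrite /lab' eqxx; split.
    - by move=> i; rewrite r2.
    - by move=> a b /i2 /(tauf_inj sgi).
    - by move=> x /s2 [m <-]; exists (invF (tauf_inj sgi) m); rewrite f_invF.
  by rewrite lab'E //; apply: H1.
move=> k; rewrite ltnS leq_eqVlt => /orP [/eqP -> | kK] i j.
  by rewrite lab'E // /lab' eqxx -sgE hl FL.
by rewrite !lab'E ?(ltnW kK) //; apply: H2.
Qed.

Lemma stack_section : iso_nice_section lt.
Proof.
case: (glue (leqnn n)) => lab [H1 H2].
have rl k i : k <= n -> rank lt (lab k i) = k by move=> kn; case: (H1 k kn).
have far : forall d k, k + d.+2 <= n -> forall i j, lt (lab k i) (lab (k + d.+2) j).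
  elim=> [|d IH] k hk i j.
    case: (two_step i j) => m /andP [a b].
    rewrite addn2 in hk *.
    by apply: (tr (y := lab k.+1 m)); rewrite H2 //; lia.
  apply: (tr (y := lab (k + d.+2) j)); first by apply: IH; lia.
  by rewrite (addnS k d.+2) H2 ?adj_refl //; lia.
have char k l : k <= n -> l <= n -> forall i j,
    lt (lab k i) (lab l j) = ((k.+1 == l) && adj i j) || (k.+2 <= l).
  move=> kn ln i j; case: (leqP l k) => [lk | kl].
    rewrite (_ : (k.+1 == l) = false); last by apply/negbTE; lia.
    rewrite (_ : (k.+2 <= l) = false); last by apply/negbTE; lia.
    apply/negbTE/negP => /(rank_lt irr tr); rewrite !rl // => h.
    by move: (leq_trans h lk); rewrite ltnn.
  case: (eqVneq l k.+1) => [-> | ne].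
    by rewrite ltnn orbF andTb H2 //; lia.
  rewrite (_ : (k.+2 <= l) = true); last by apply/idP; lia.
  rewrite orbT (_ : l = k + (l - k.+2).+2); last by lia.
  by apply: far; lia.
pose g (u : 'I_3 * 'I_n.+1) := lab u.2 u.1.
have ginj : injective g.
  move=> [i k] [j l]; rewrite /g /= => e.
  have kl : k = l.
    apply: val_inj => /=; have := congr1 (rank lt) e.
    by rewrite !rl // -ltnS ltn_ord.
  by subst l; case: (H1 k (ltn_ord k)) => _ ik _; rewrite (ik _ _ e).
have gsurj : forall x, exists u, g u = x.
  move=> x; have rx := rank_le irr tr x rk.
  case: (H1 _ rx) => _ _ /(_ x erefl) [i e].
  by exists (i, inord (rank lt x)); rewrite /g /= inordK.
pose f x := odflt (ord0, ord0) [pick u | g u == x].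
have fK : cancel f g.
  move=> x; rewrite /f; case: pickP => [u /eqP // | h].
  by case: (gsurj x) => u e; move: (h u); rewrite e eqxx.
have gK : cancel g f by move=> u; apply: ginj; rewrite fK.
pose lt' u v := lt (g u) (g v).
have ch u v : lt' u v = ((u.2.+1 == v.2) && adj u.1 v.1) || (u.2.+2 <= v.2).
  by rewrite /lt' /g char // -ltnS ltn_ord.
right; exists n; split => //; exists lt'; split.
- split; first by move=> u; rewrite /lt' irr.
  by move=> u v w; rewrite /lt'; apply: tr.
- split.
  + move=> i k l kl; rewrite ch /=.
    case: eqP => [_|ne]; first by rewrite adj_refl.
    by apply/orP; right; lia.
  + by move=> i j k; rewrite ch /=; apply/negP => /orP [/andP [/eqP h _] | h]; lia.
  + move=> i j k l; rewrite !ch /= => /orP [/andP [e a] | h]; apply/orP.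
      by left; rewrite e adj_rot.
    by right.
  + move=> k kn; exists ord0, o1; rewrite ch /= !inordK //; try lia.
    by rewrite eqxx ltnn orbF.
- move=> [i k] [j l]; rewrite ch /= => h.
  have kl : k < l by case/orP: h => [/andP [/eqP <- _] | h]; lia.
  have ln : l <= n by rewrite -ltnS ltn_ord.
  split.
  + case: (adj_other i j) => i' /andP [a ne].
    exists (i', inord k.+1); rewrite !ch /= inordK; last by lia.
    split; first by rewrite eqxx a.
    case=> [[e _] | ]; first by move: ne; rewrite e eqxx.
    rewrite eqSS; case/orP => [/andP [/eqP e _] | h2]; lia.
  + case: (adj_other2 i j) => j' /andP [a ne].
    exists (j', inord l.-1); rewrite !ch /= inordK; last by lia.
    split; first by rewrite (_ : l.-1.+1 = l) ?eqxx ?a //; lia.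
    case=> [[e _] | ]; first by move: ne; rewrite e eqxx.
    case/orP => [/andP [/eqP e _] | h2]; lia.
- exists f; split; first by exists g.
  by move=> x y; rewrite /lt' !fK.
Qed.
End Stack.

Definition dif3 (j i : 'I_3) : 'I_3 := Ordinal (@ltn_pmod (j + 3 - i) 3 isT).
Definition neg3 (i : 'I_3) := dif3 ord0 i.
Definition sg3 (b : bool) (i : 'I_3) := if b then i else neg3 i.
Definition rot (N : nat) (u : 'I_3 * 'I_N) := (ordS u.1, u.2).

Lemma ordS3 (i : 'I_3) : ordS (ordS (ordS i)) = i.
Proof. by apply: val_inj; case: i => [[|[|[|?]]] ?]. Qed.

Lemma iter_rot0 N (i : 'I_3) (K : 'I_N) : iter i (@rot N) (ord0, K) = (i, K).
Proof. by case: i => [[|[|[|?]]] ?] //=; congr pair; apply: val_inj. Qed.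

Lemma iter_rotd N (i j : 'I_3) (L : 'I_N) : iter i (@rot N) (dif3 j i, L) = (j, L).
Proof. by move: i j; do 2!case=> [[|[|[|?]]] ?] //=; congr pair; apply: val_inj. Qed.

Lemma dif_eq0 (j : 'I_3) : (dif3 ord0 j == ord0) = (j == ord0).
Proof. by case: j => [[|[|[|?]]] ?]. Qed.

Lemma sg3K b (i : 'I_3) : sg3 b (sg3 b i) = i.
Proof. by case: b => //; apply: val_inj; case: i => [[|[|[|?]]] ?]. Qed.

Lemma C6_sg (b1 b2 : bool) : b1 != b2 -> forall i j,
  C6_lt (false, sg3 b2 i) (true, sg3 b2 j) = nth true [:: true; b1; b2] (dif3 j i).
Proof. by case: b1; case: b2 => // _; do 2!case=> [[|[|[|?]]] ?]. Qed.

Section SecStack.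
Variables (T : finType) (lt : rel T).
Hypotheses (irr : irreflexive lt) (tr : transitive lt) (rkd : ranked lt).
Variables (n : nat) (lt' : rel ('I_3 * 'I_n.+1)) (f : T -> 'I_3 * 'I_n.+1)
  (g : 'I_3 * 'I_n.+1 -> T).
Hypotheses (n1 : 0 < n) (so' : strict_order lt') (ax : section_axioms lt')
  (nc : nice lt') (fK : cancel f g) (gK : cancel g f)
  (hf : forall x y, lt x y = lt' (f x) (f y)).

Lemma section_stack : six_stack lt.
Proof.
case: so' => irr' tr'.
case: ax => ax1 ax2 ax3 ax4.
have hg u v : lt (g u) (g v) = lt' u v by rewrite hf !gK.
have L1 i j (k l : 'I_n.+1) : lt' (i,k) (j,l) -> k < l.
  move=> h; rewrite ltnNge; apply/negP => lk.
  case: (ltngtP l k) => [lk' | kl | e]; last first.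
  - by have e' : l = k := val_inj e; subst; rewrite (negbTE (ax2 i j k)) in h.
  - lia.
  - by move: (ax2 i j k); rewrite (tr' _ _ _ h (ax1 j l k lk')).
have rf x : rank lt x = (f x).2.
  apply/eqP; rewrite eqn_leq; apply/andP; split.
    apply: (@rank_le_h _ _ ( fun x => nat_of_ord (f x).2)) => a b; rewrite hf.
    by case: (f a) => ? ?; case: (f b) => ? ?; apply: L1.
  have lb : forall m i, m <= n -> m <= rank lt (g (i, inord m)).
    elim => [//|m IH] i mn.
    have h : lt (g (i, inord m)) (g (i, inord m.+1)).
      by rewrite hg; apply: (ax1); rewrite !inordK //; lia.
    by apply: leq_ltn_trans (IH i (ltnW mn)) (rank_lt irr tr h).
  rewrite -{2}(fK x); case: (f x) => i k /=.
  by have := lb k i (ltn_ord k); rewrite inord_val.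
have rg u : rank lt (g u) = u.2 by rewrite rf gK.
have rk : ranked_of_rank lt n.
  case: rkd => n' rk'; suff : n' = n by move=> <-.
  pose C := [set g (ord0, k) | k : 'I_n.+1].
  have cC : is_chain lt C.
    move=> x y /imsetP [k _ ->] /imsetP [l _ ->] ne.
    rewrite !hg; case: (ltngtP k l) => [kl | lk | e];
      try by apply/orP; first [left; apply: (ax1); done | right; apply: (ax1); done].
    by move: ne; rewrite (val_inj e) eqxx.
  have mC : maximal_chain lt C.
    split => // D cD sCD; apply/eqP; rewrite eqEsubset sCD andbT.
    apply/subsetP => x xD.
    have yC : g (ord0, (f x).2) \in C by apply/imsetP; exists (f x).2.
    case: (eqVneq x (g (ord0, (f x).2))) => [-> // | ne].
    by case/orP: (cD _ _ xD (subsetP sCD _ yC) ne) => /(rank_lt irr tr);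
      rewrite rg rf ltnn.
  have := rk' C mC; rewrite card_imset ?card_ord; first by case.
  by move=> a b /(congr1 f); rewrite !gK => [[]].
have rotE u v : lt' (rot u) (rot v) = lt' u v.
  case: u v => [i k] [j l]; apply/idP/idP => h; last exact: (ax3).
  by rewrite -[i]ordS3 -[j]ordS3; apply: (ax3); apply: (ax3); exact: h.
have rotm m u v : lt' (iter m (@rot _) u) (iter m (@rot _) v) = lt' u v.
  by elim: m => //= m IH; rewrite rotE.
have relsub i j k l : lt' (i,k) (j,l) = lt' (ord0,k) (dif3 j i, l).
  by rewrite -(rotm i (ord0,k) (dif3 j i, l)) iter_rot0 iter_rotd.
exists n; split => //; split => // k kn.
pose K := (inord k : 'I_n.+1); pose K1 := (inord k.+1 : 'I_n.+1).
have vK : nat_of_ord K = k by rewrite inordK //; lia.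
have vK1 : nat_of_ord K1 = k.+1 by rewrite inordK.
pose b d := lt' (ord0, K) (d, K1).
have b0 : b ord0 by apply: (ax1); rewrite vK vK1.
have bval d : b d = nth true [:: true; b o1; b o2] d.
  case: d => [[|[|[|?]]] p] //=; first by rewrite -b0; congr b; apply: val_inj.
  - by congr b; apply: val_inj.
  - by congr b; apply: val_inj.
have rel i j : lt' (i,K) (j,K1) = b (dif3 j i) := relsub i j K K1.
have b12 : ~~ (b o1 && b o2).
  case: (ax4 k kn) => i [j h]; move: h; rewrite -/K -/K1 rel bval.
  apply: contra => /andP [h1 h2].
  by case: (dif3 j i) => [[|[|[|?]]] ?] //=.
have b1or2 : b o1 || b o2.
  apply: contraT; rewrite negb_or => /andP [nb1 nb2].
  have nbd j : j != ord0 -> ~~ b (dif3 ord0 j).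
    rewrite -dif_eq0 bval.
    by case: (dif3 ord0 j) => [[|[|[|?]]] ?].
  have pq : lt' (ord0, K) (ord0, K1) := b0.
  case: (nc pq) => _ [[j l] [sq nsp]].
  have lk : l < K1 := L1 _ _ _ _ sq.
  case: (ltngtP l K) => [lK | Kl | e].
  - have sq' : lt (g (j,l)) (g (ord0,K1)) by rewrite hg.
    have := cover irr tr (k := k) rk sq'; rewrite !rg /= vK1 ltnSn (_ : l < k = true) ?andbT; last by rewrite -vK.
    move=> /(_ isT) [m [rm sm mq]].
    move: rm sm mq; rewrite -(fK m) rg; case: (f m) => j' l' /= rm.
    have el : l' = K by apply: ord_inj; rewrite rm vK.
    subst l'; rewrite !hg rel => sm mq.
    case: (eqVneq j' ord0) => [ej | nj]; last by move: (nbd _ nj); rewrite mq.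
    by subst j'; case: nsp; right.
  - by move: Kl lk; rewrite vK vK1; lia.
  - have e' : l = K := val_inj e; subst l.
    move: sq; rewrite rel => sq.
    case: (eqVneq j ord0) => [ej | nj]; last by move: (nbd _ nj); rewrite sq.
    by subst j; case: nsp; left.
pose sig := sg3 (b o2).
have hC i j : C6_lt (false, sig i) (true, sig j) = b (dif3 j i).
  rewrite (@C6_sg (b o1) (b o2)) -?bval //.
  by move: b12 b1or2; case: (b o1); case: (b o2).
pose SL := {x : T | rank_slice lt k k.+1 x}.
have psiP (c : bool * 'I_3) : rank_slice lt k k.+1 (g (sig c.2, if c.1 then K1 else K)).
  by rewrite /rank_slice rg /=; case: (c.1); rewrite ?vK ?vK1 ?leqnn ?leqnSn.
pose phi (u : SL) := ((nat_of_ord (f (val u)).2 == k.+1), sig (f (val u)).1).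
pose psi (c : bool * 'I_3) : SL := exist (fun x => rank_slice lt k k.+1 x) _ (psiP c).
have lev x : rank_slice lt k k.+1 x -> (f x).2 = if (nat_of_ord (f x).2 == k.+1) then K1 else K.
  rewrite /rank_slice rf => /andP [h1 h2].
  case: eqP => e; apply: ord_inj; rewrite ?vK ?vK1 //; lia.
exists phi; split.
  exists psi.
  - move=> [x xs]; apply: val_inj; rewrite /= /sig sg3K -(lev _ xs).
    by rewrite -surjective_pairing fK.
  - move=> [c i]; rewrite /phi /psi /= gK /= /sig sg3K.
    case: c; rewrite /= ?vK1 ?vK ?eqxx //.
    by rewrite (_ : (k == k.+1) = false) //; lia.
move=> [x xs] [y ys]; rewrite /Pij /sub_rel /phi /= hf.
have ex := lev x xs; have ey := lev y ys.
case: (f x) ex => i l ex; case: (f y) ey => j m ey.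
have kk : (k == k.+1) = false by apply/negbTE; lia.
have [e1|e1] : l = K1 \/ l = K by case: (_ == _) ex; [left|right].
all: have [e2|e2] : m = K1 \/ m = K by case: (_ == _) ey; [left|right].
all: subst l m; rewrite ?vK1 ?vK ?eqxx ?kk.
- by rewrite (negbTE (ax2 _ _ _)).
- by apply/negbTE/negP => /L1; rewrite vK vK1; lia.
- by rewrite rel -hC.
- by rewrite (negbTE (ax2 _ _ _)).
Qed.
End SecStack.

Section Block.
Variables (T : finType) (lt : rel T).
Hypotheses (irr : irreflexive lt) (tr : transitive lt).
Variables (K : nat) (b : T -> 'I_K).
Hypothesis hb : forall x y, b x < b y -> lt x y.
Variable i : 'I_K.

Let U := {x : T | b x == i}.
Let ltU := sub_rel (fun x => b x == i) lt.

Lemma cmpb x y : b x != b y -> lt x y || lt y x.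
Proof.
move=> ne; case: (ltngtP (b x) (b y)) => [h | h | e];
  try by apply/orP; first [left; apply: hb; done | right; apply: hb; done].
by move: ne; rewrite (val_inj e) eqxx.
Qed.

Lemma block_card N M0 (C : {set U}) : ranked_of_rank lt N -> maximal_chain lt M0 ->
  maximal_chain ltU C -> #|C| + #|[set x in M0 | b x != i]| = N.+1.
Proof.
move=> rk [cM0 mM0] [cC mC].
pose R := [set x in M0 | b x != i].
pose M' := (val @: C) :|: R.
have inA x : x \in val @: C -> b x == i by case/imsetP => u _ ->; exact: (valP u).
have cM' : is_chain lt M'.
  move=> x y; rewrite !inE => hx hy ne.
  case/orP: hx => hx; case/orP: hy => hy.
  - case/imsetP: hx => u uC ex; case/imsetP: hy => v vC ey; subst x y.
    by apply: cC => //; apply: contra ne => /eqP ->.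
  - by apply: cmpb; rewrite (eqP (inA _ hx)); case/andP: hy => _; rewrite eq_sym.
  - by apply: cmpb; rewrite (eqP (inA _ hy)); case/andP: hx.
  - by case/andP: hx => hx _; case/andP: hy => hy _; apply: cM0.
have mM' : maximal_chain lt M'.
  split => // D cD sMD; apply/eqP; rewrite eqEsubset sMD andbT.
  apply/subsetP => x xD.
  case: (boolP (b x == i)) => bx.
    pose u : U := exist _ x bx.
    have cC' : is_chain ltU (u |: C).
      move=> v w hv hw ne.
      have inD z : z \in u |: C -> val z \in D.
        rewrite !inE => /orP [/eqP -> // | zC].
        by apply: (subsetP sMD); rewrite !inE; apply/orP; left; apply: imset_f.
      apply: (cD); [exact: inD | exact: inD | by apply: contra ne => /eqP /val_inj ->].
    have := mC _ cC' (subsetUr _ _) => e.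
    have : u \in C by rewrite -e !inE eqxx.
    by move=> uC; rewrite !inE; apply/orP; left; apply/imsetP; exists u.
  have cM0' : is_chain lt (x |: M0).
    move=> y z; rewrite !inE => hy hz ne.
    have key w : w \in M0 -> w != x -> lt x w || lt w x.
      move=> wM wx; case: (boolP (b w == i)) => bw.
        by apply: cmpb; rewrite (eqP bw).
      have wD : w \in D by apply: (subsetP sMD); rewrite !inE wM bw orbT.
      by apply: cD; rewrite // eq_sym.
    case/orP: hy => [/eqP ey | hy]; case/orP: hz => [/eqP ez | hz]; subst.
    - by rewrite eqxx in ne.
    - by apply: key => //; rewrite eq_sym.
    - by rewrite orbC; apply: key.
    - by apply: cM0.
  have := mM0 _ cM0' (subsetUr _ _) => e.
  have : x \in M0 by rewrite -e !inE eqxx.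
  by move=> xM; rewrite !inE xM bx orbT.
have := rk M' mM'; rewrite cardsU.
have -> : val @: C :&: R = set0.
  apply/setP => x; rewrite !inE; apply/negP => /andP [/inA bx /andP [_ nbx]].
  by rewrite bx in nbx.
rewrite cards0 subn0 card_imset //; exact: val_inj.
Qed.

Lemma block_ranked (x0 : T) : b x0 == i -> ranked lt -> ranked ltU.
Proof.
move=> hx0 [N rk].
have irrU : irreflexive ltU by move=> u; apply: irr.
have trU : transitive ltU by move=> ? ? ? ; apply: tr.
have c0 : is_chain lt set0 by move=> ? ?; rewrite inE.
case: (ext_max c0) => M0 [mM0 _].
have c0U : is_chain ltU set0 by move=> ? ?; rewrite inE.
case: (ext_max c0U) => C0 [mC0 _].
have h0 := block_card rk mM0 mC0.
have pos : 0 < #|C0|.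
  rewrite lt0n; apply/negP => /eqP /cards0_eq e0.
  pose u : U := exist _ x0 hx0.
  have cu : is_chain ltU [set u] by move=> v w; rewrite !inE => /eqP -> /eqP ->; rewrite eqxx.
  have := (proj2 mC0) _ cu; rewrite e0 sub0set => /(_ isT) e.
  have : u \in [set u] by rewrite inE.
  by rewrite e inE.
exists (#|C0|.-1) => C mC.
have h := block_card rk mM0 mC.
rewrite prednK //; apply/eqP; rewrite -(eqn_add2r #|[set x in M0 | b x != i]|) h h0 //.
Qed.

End Block.

Lemma part1 (T : finType) (lt : rel T) : strict_order lt -> ranked lt ->
  (iso_nice_section lt <-> two_antichain lt \/ six_stack lt).
Proof.
move=> [irr tr] rkd; split.
  case=> [[ta _] | [n [n1 [lt' [so' ax nc [f [[g fK gK] hf]]]]]]]; first by left.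
  by right; apply: (section_stack irr tr rkd n1 so' ax nc fK gK hf).
case=> [ta | [n [n1 [rk hiso]]]].
  by left; split => // p q; rewrite (negbTE (proj2 ta p q)).
exact: (stack_section irr tr n1 rk hiso).
Qed.

Theorem proposition4p2 :
  (forall (T : finType) (lt : rel T), strict_order lt -> ranked lt ->
     (iso_nice_section lt <-> two_antichain lt \/ six_stack lt)) /\
  (forall (T : finType) (lt : rel T), strict_order lt -> ranked lt ->
     (tower_of_nice_sections lt <-> six_tower lt)).
Proof.
split; first exact: part1.
move=> T lt [irr tr] rkd.
have soB : forall K (b : T -> 'I_K) i, strict_order (sub_rel (fun x => b x == i) lt).
  by move=> K b i; split; [move=> u; apply: irr | move=> ? ? ?; apply: tr].
split.
  case=> K [b [K0 [hb hQ]]]; exists K, b; split => //; split => // i.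
  have hi := hQ i.
  have [x0 hx0] : exists x0, b x0 == i.
    case: hi => [[[c _] _] | [n [n1 [lt' [_ _ _ [f [[g fK gK] _]]]]]]].
      have : 0 < 2 by [].
      by rewrite -c => /card_gt0P [u _]; exists (val u); exact: (valP u).
    by exists (val (g (ord0, ord0))); exact: (valP (g (ord0, ord0))).
  have rkB := block_ranked irr tr hb hx0 rkd.
  by apply/(part1 (soB K b i) rkB).
case=> K [b [K0 [hb hQ]]]; exists K, b; split => //; split => // i.
case: (hQ i) => [ta | ss].
  by left; split => // p q; rewrite (negbTE (proj2 ta p q)).
case: (soB K b i) => irrB trB.
case: ss => n [n1 [rk hiso]].
exact: (stack_section irrB trB n1 rk hiso).
Qed.
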